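(* Let an operational theory contain binary-outcome measurements $\mathcal{M}_1,\mathcal{M}_2,\mathcal{M}_3$ (outcomes $X_i\in\{0,1\}$) that are pairwise jointly measurable via joint measurements $\mathcal{M}_{12},\mathcal{M}_{13},\mathcal{M}_{23}$, and a preparation $\mathcal{P}_*$ with $p(X_i=0,X_j=1|\mathcal{M}_{ij};\mathcal{P}_* )=p(X_i=1,X_j=0|\mathcal{M}_{ij};\mathcal{P}_* )=\tfrac12$ for all $i\neq j$. Then there is no ontological model reproducing these statistics that is measurement-noncontextual and outcome-deterministic (for $\mathcal{M}_1,\mathcal{M}_2,\mathcal{M}_3,\mathcal{M}_{12},\mathcal{M}_{13},\mathcal{M}_{23}$).
   Context: An operational theory assigns outcome probabilities $p(X|M;P)$ to preparation procedures $P$ and measurement procedures $M$; measurements $\mathcal{M}$ (preparations $\mathcal{P}$) are equivalence classes of procedures with identical statistics. A joint measurement $\mathcal{M}_{ij}$ of $\mathcal{M}_i,\mathcal{M}_j$ has outcome $(X_i,X_j)$ whose marginals reproduce the statistics of $\mathcal{M}_i$ and $\mathcal{M}_j$ for every preparation. An ontological model specifies ontic states $\lambda\in\Lambda$, distributions $p(\lambda|P)$ and response functions $p(X|M;\lambda)$ with $p(X|M;P)=\sum_\lambda p(X|M;\lambda)p(\lambda|P)$. It is measurement-noncontextual if the response function of a procedure depends only on its equivalence class, and outcome-deterministic for a measurement if its response function takes values in $\{0,1\}$. *)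

(* Defs.v *)
From HB Require Import structures.
From mathcomp Require Import all_boot all_order all_algebra.
From mathcomp Require Import classical_sets reals constructive_ereal ereal esum.

Set Implicit Arguments.
Unset Strict Implicit.
Unset Printing Implicit Defensive.

Import Order.TTheory GRing.Theory Num.Theory.
Local Open Scope ring_scope.
Local Open Scope classical_set_scope.

Record optheory (R : realType) := OpTheory {
  Prep : Type;
  MProc : finType -> Type;
  prob : forall X : finType, MProc X -> Prep -> X -> R;
  post : forall X Y : finType, (X -> Y) -> MProc X -> MProc Y;
  prob_ge0 : forall (X : finType) M P x, 0 <= @prob X M P x;
  prob_sum1 : forall (X : finType) M P, \sum_(x : X) @prob X M P x = 1;
  prob_post : forall (X Y : finType) (f : X -> Y) M P y,
      @prob Y (post f M) P y = \sum_(x : X | f x == y) @prob X M P x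
}.

Arguments prob {R o X}.
Arguments post {R o X Y}.

(* Operational equivalence of two measurement procedures (same statistics
   for every preparation procedure): measurements are the classes. *)
Definition op_equiv R (T : optheory R) (X : finType) (M M' : MProc T X) :=
  forall (P : Prep T) (x : X), prob M P x = prob M' P x.

Definition joint_meas R (T : optheory R) (Mi Mj : MProc T bool)
  (Mij : MProc T (bool * bool)%type) :=
  op_equiv (post (fun o : bool * bool => o.1) Mij) Mi /\
  op_equiv (post (fun o : bool * bool => o.2) Mij) Mj.

Record ontmodel R (T : optheory R) := OntModel {
  Lam : choiceType;
  mu : Prep T -> Lam -> R;
  resp : forall X : finType, MProc T X -> Lam -> X -> R;
  mu_ge0 : forall P l, 0 <= mu P l;
  mu_sum1 : forall P, (\esum_(l in [set: Lam]) (mu P l)%:E = 1)%E;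
  resp_ge0 : forall (X : finType) M l x, 0 <= @resp X M l x;
  resp_sum1 : forall (X : finType) M l, \sum_(x : X) @resp X M l x = 1;
  resp_post : forall (X Y : finType) (f : X -> Y) M l y,
      @resp Y (post f M) l y = \sum_(x : X | f x == y) @resp X M l x;
  reproduce : forall (X : finType) M P x,
      ((prob M P x)%:E = \esum_(l in [set: Lam]) (@resp X M l x * mu P l)%:E)%E
}.

Arguments resp {R T} o {X}.

Definition meas_noncontextual R (T : optheory R) (O : ontmodel T) :=
  forall (X : finType) (M M' : MProc T X), op_equiv M M' -> resp O M = resp O M'.

Definition outcome_det R (T : optheory R) (O : ontmodel T) (X : finType)
  (M : MProc T X) :=
  forall l x, resp O M l x = 0 \/ resp O M l x = 1.

(* Main.v *)
Require Import Defs.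
From HB Require Import structures.
From mathcomp Require Import all_boot all_order all_algebra.
From mathcomp Require Import classical_sets reals constructive_ereal ereal esum.
From mathcomp Require Import lra.

Import Order.TTheory GRing.Theory Num.Theory.
Local Open Scope ring_scope.

Lemma sumbb (R : realType) (P : pred (bool * bool)) (F : bool * bool -> R) :
  \sum_(x | P x) F x =
  (if P (true,true) then F (true,true) else 0) +
  (if P (true,false) then F (true,false) else 0) +
  (if P (false,true) then F (false,true) else 0) +
  (if P (false,false) then F (false,false) else 0).
Proof.
rewrite big_mkcond /=.
transitivity (\sum_(i : bool) \sum_(j : bool) (if P (i, j) then F (i, j) else 0)).
  by rewrite pair_big /=; apply: eq_bigr => -[i j].
by rewrite !big_bool /= !addrA.
Qed.

Lemma sumb (R : realType) (F : bool -> R) : \sum_(x : bool) F x = F true + F false.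
Proof. by rewrite big_bool. Qed.

Section Pt.
Variables (R : realType) (T : optheory R) (O : ontmodel T).
Hypothesis NC : meas_noncontextual O.

Lemma marg l (Mi Mj : MProc T bool) (Mij : MProc T (bool * bool)%type) :
  joint_meas Mi Mj Mij ->
  [/\ resp O Mi l true = resp O Mij l (true,true) + resp O Mij l (true,false),
      resp O Mi l false = resp O Mij l (false,true) + resp O Mij l (false,false),
      resp O Mj l true = resp O Mij l (true,true) + resp O Mij l (false,true) &
      resp O Mj l false = resp O Mij l (true,false) + resp O Mij l (false,false)].
Proof.
move=> [h1 h2]; have e1 := NC _ _ _ h1; have e2 := NC _ _ _ h2.
rewrite -e1 -e2 !resp_post !sumbb /=.
split; lra.
Qed.

Lemma pair_bound (Mi Mj : MProc T bool) (Mij : MProc T (bool * bool)%type) l :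
  joint_meas Mi Mj Mij ->
  let a := resp O Mij l (false,true) + resp O Mij l (true,false) in
  let xi := resp O Mi l true in let xj := resp O Mj l true in
  [/\ a <= xi + xj, a <= 2 - xi - xj & a <= 1].
Proof.
move=> J a xi xj; have [h1 h2 h3 h4] := @marg l _ _ _ J.
have s1 := @resp_sum1 _ _ O _ Mi l; have s2 := @resp_sum1 _ _ O _ Mj l.
rewrite sumb in s1; rewrite sumb in s2.
have p1 := @resp_ge0 _ _ O _ Mij l (true,true).
have p2 := @resp_ge0 _ _ O _ Mij l (true,false).
have p3 := @resp_ge0 _ _ O _ Mij l (false,true).
have p4 := @resp_ge0 _ _ O _ Mij l (false,false).
rewrite /a /xi /xj; split; lra.
Qed.

Lemma pairE (Mij : MProc T (bool * bool)%type) P :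
  ((prob Mij P (false,true) + prob Mij P (true,false))%:E =
  \esum_(l in [set: Lam O])
     ((resp O Mij l (false,true) + resp O Mij l (true,false)) * mu P l)%:E)%E.
Proof.
rewrite EFinD !(reproduce O) -esumD; last 2 first.
- by move=> l _; rewrite lee_fin mulr_ge0 // ?resp_ge0 ?mu_ge0.
- by move=> l _; rewrite lee_fin mulr_ge0 // ?resp_ge0 ?mu_ge0.
by apply: eq_esum => l _; rewrite -EFinD mulrDl.
Qed.
End Pt.

Theorem corollary2 (R : realType) (T : optheory R)
  (M1 M2 M3 : MProc T bool) (M12 M13 M23 : MProc T (bool * bool)%type)
  (Pstar : Prep T) :
  joint_meas M1 M2 M12 -> joint_meas M1 M3 M13 -> joint_meas M2 M3 M23 ->
  prob M12 Pstar (false, true) = 1 / 2 -> prob M12 Pstar (true, false) = 1 / 2 ->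
  prob M13 Pstar (false, true) = 1 / 2 -> prob M13 Pstar (true, false) = 1 / 2 ->
  prob M23 Pstar (false, true) = 1 / 2 -> prob M23 Pstar (true, false) = 1 / 2 ->
  ~ exists O : ontmodel T,
      meas_noncontextual O /\
      outcome_det O M1 /\ outcome_det O M2 /\ outcome_det O M3 /\
      outcome_det O M12 /\ outcome_det O M13 /\ outcome_det O M23.
Proof.
move=> J12 J13 J23 p1 p2 p3 p4 p5 p6 [O [NC [d1 [d2 [d3 _]]]]].
set a := fun (M : MProc T (bool * bool)%type) l =>
  resp O M l (false,true) + resp O M l (true,false).
have g2 : forall l, a M12 l + a M13 l + a M23 l <= 2.
  move=> l.
  have [b1 c1 e1] := @pair_bound _ _ O NC _ _ _ l J12.
  have [b2 c2 e2] := @pair_bound _ _ O NC _ _ _ l J13.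
  have [b3 c3 e3] := @pair_bound _ _ O NC _ _ _ l J23.
  rewrite /a.
  by case: (d1 l true) => h1; case: (d2 l true) => h2; case: (d3 l true) => h3;
    rewrite h1 h2 h3 in b1 c1 b2 c2 b3 c3; lra.
have ag0 : forall M l, (0 <= (a M l * mu Pstar l)%:E)%E.
  by move=> M l; rewrite lee_fin mulr_ge0 ?mu_ge0 ?addr_ge0 ?resp_ge0.
have H3 : (3%:E = \esum_(l in [set: Lam O])
    ((a M12 l + a M13 l + a M23 l) * mu Pstar l)%:E)%E.
  have -> : (3 : R) = (prob M12 Pstar (false,true) + prob M12 Pstar (true,false)) +
     (prob M13 Pstar (false,true) + prob M13 Pstar (true,false)) +
     (prob M23 Pstar (false,true) + prob M23 Pstar (true,false)).
    rewrite p1 p2 p3 p4 p5 p6; lra.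
  rewrite (eq_esum (b := fun l => ((a M12 l * mu Pstar l)%:E + (a M13 l * mu Pstar l)%:E)
       + (a M23 l * mu Pstar l)%:E)%E); last by move=> l _; rewrite -!EFinD !mulrDl.
  rewrite esumD //; last by move=> l _; exact: (adde_ge0 (ag0 _ _) (ag0 _ _)).
  rewrite esumD //.
  by rewrite -!pairE -!EFinD.
have H2 : (\esum_(l in [set: Lam O])
    ((a M12 l + a M13 l + a M23 l) * mu Pstar l)%:E <= 2%:E)%E.
  apply: (le_trans (le_esum (b := fun l => (mu Pstar l)%:E + (mu Pstar l)%:E)%E _)).
    move=> l _; rewrite -EFinD lee_fin.
    have := mu_ge0 Pstar l; have := g2 l; nra.
  rewrite esumD ?mu_sum1 //; by move=> l _; rewrite lee_fin mu_ge0.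
by rewrite -H3 lee_fin in H2; lra.
Qed.
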